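(* Let $\mathbf{A}$ be an additive category with weak kernels, let $T: \mathbf{A}\times\mathbf{A}\to\mathcal{A}(\mathbf{A})$ be a bilinear functor with extension $\otimes := \widehat{T}: \mathcal{A}(\mathbf{A})\times\mathcal{A}(\mathbf{A})\to\mathcal{A}(\mathbf{A})$, and let $A = (a\xleftarrow{\rho_a} r_a)\in\mathcal{A}(\mathbf{A})$. Suppose the functors $-\otimes a$ and $-\otimes r_a$ from $\mathcal{A}(\mathbf{A})$ to $\mathcal{A}(\mathbf{A})$ have right adjoints. Then $-\otimes A: \mathcal{A}(\mathbf{A})\to\mathcal{A}(\mathbf{A})$ has a right adjoint.
   Context: The Freyd category $\mathcal{A}(\mathbf{A})$: objects are morphisms $\rho_a: r_a \to a$ of $\mathbf{A}$, written $(a \xleftarrow{\rho_a} r_a)$; morphisms $(a \xleftarrow{\rho_a} r_a) \to (b \xleftarrow{\rho_b} r_b)$ are morphisms $\alpha: a\to b$ of $\mathbf{A}$ with $\alpha\circ\rho_a = \rho_b\circ\omega$ for some $\omega: r_a\to r_b$, modulo those of the form $\rho_b\circ\lambda$ with $\lambda: a\to r_b$; it is additive with cokernels. Objects $x\in\mathbf{A}$ are regarded as objects $(x\leftarrow 0)$ of $\mathcal{A}(\mathbf{A})$. The extension $\widehat T$ is the bilinear functor given on objects by $\widehat T(A,B) = \operatorname{cok}\big(T(a,r_b)\oplus T(r_a,b) \xrightarrow{(T(\mathrm{id}_a,\rho_b),\ T(\rho_a,\mathrm{id}_b))} T(a,b)\big)$ and on morphisms by the induced maps; it is right exact in each variable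 and $\widehat T(x,y)\cong T(x,y)$ for $x,y\in\mathbf{A}$. A weak kernel of $\alpha: x\to y$ is $\iota: k\to x$ with $\alpha\circ\iota=0$ through which every $\tau$ with $\alpha\circ\tau=0$ factors (not necessarily uniquely). *)

(* Defs.v *)
From mathcomp Require Import all_boot all_algebra.
Set Implicit Arguments. Unset Strict Implicit. Unset Printing Implicit Defensive.
Import GRing.Theory.
Local Open Scope ring_scope.

Record AddCat := {
  Ob :> Type;
  Hom : Ob -> Ob -> zmodType;
  idm : forall a, Hom a a;
  comp : forall a b c, Hom b c -> Hom a b -> Hom a c;
  compA : forall a b c d (h : Hom c d) (g : Hom b c) (f : Hom a b),
    comp h (comp g f) = comp (comp h g) f;
  comp1m : forall a b (f : Hom a b), comp (idm b) f = f;
  compm1 : forall a b (f : Hom a b), comp f (idm a) = f;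
  compDl : forall a b c (g1 g2 : Hom b c) (f : Hom a b),
    comp (g1 + g2) f = comp g1 f + comp g2 f;
  compDr : forall a b c (g : Hom b c) (f1 f2 : Hom a b),
    comp g (f1 + f2) = comp g f1 + comp g f2;
  zob : Ob;
  zob_init : forall a (f g : Hom zob a), f = g;
  zob_term : forall a (f g : Hom a zob), f = g;
  bsum : Ob -> Ob -> Ob;
  bin1 : forall a b, Hom a (bsum a b);
  bin2 : forall a b, Hom b (bsum a b);
  bpr1 : forall a b, Hom (bsum a b) a;
  bpr2 : forall a b, Hom (bsum a b) b;
  bpr1in1 : forall a b, comp (bpr1 a b) (bin1 a b) = idm a;
  bpr2in2 : forall a b, comp (bpr2 a b) (bin2 a b) = idm b;
  bpr1in2 : forall a b, comp (bpr1 a b) (bin2 a b) = 0;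
  bpr2in1 : forall a b, comp (bpr2 a b) (bin1 a b) = 0;
  bsum_id : forall a b,
    comp (bin1 a b) (bpr1 a b) + comp (bin2 a b) (bpr2 a b) = idm (bsum a b)
}.

Arguments Hom {C} : rename.
Arguments idm {C} a : rename.
Arguments comp {C a b c} : rename.
Arguments zob {C} : rename.
Arguments bsum {C} : rename.
Arguments bin1 {C a b} : rename.
Arguments bin2 {C a b} : rename.
Arguments bpr1 {C a b} : rename.
Arguments bpr2 {C a b} : rename.

Definition has_weak_kernels (C : AddCat) : Prop :=
  forall (x y : C) (alpha : Hom x y),
    exists (k : C) (iota : Hom k x),
      comp alpha iota = 0 /\
      forall (t : C) (tau : Hom t x), comp alpha tau = 0 ->
        exists sigma : Hom t k, tau = comp iota sigma.

Definition bmap (C : AddCat) (a b c : C) (f : Hom a c) (g : Hom b c)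
  : Hom (bsum a b) c := comp f bpr1 + comp g bpr2.

Record FObj (C : AddCat) := FOb { fo : C; fr : C; frho : Hom fr fo }.
Arguments FOb {C} fo fr frho.
Arguments fo {C}. Arguments fr {C}. Arguments frho {C}.

(* representatives of morphisms (a <- r_a) -> (b <- r_b) *)
Definition FHom (C : AddCat) (A B : FObj C) :=
  { alpha : Hom (fo A) (fo B) |
    exists omega : Hom (fr A) (fr B), comp alpha (frho A) = comp (frho B) omega }.

Definition requiv (C : AddCat) (B : FObj C) (a : C) (u v : Hom a (fo B)) : Prop :=
  exists lambda : Hom a (fr B), u - v = comp (frho B) lambda.
Arguments requiv {C} B {a}.

(* equality of morphisms in A(A) *)
Definition fequiv (C : AddCat) (A B : FObj C) (f g : FHom A B) : Prop :=
  requiv B (sval f) (sval g).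

Lemma fcomp_proof (C : AddCat) (A B D : FObj C) (g : FHom B D) (f : FHom A B) :
  exists omega : Hom (fr A) (fr D),
    comp (comp (sval g) (sval f)) (frho A) = comp (frho D) omega.
Proof.
case: f => f [w1 e1]; case: g => g [w2 e2] /=.
exists (comp w2 w1).
by rewrite -compA e1 !compA e2.
Qed.

Definition fcomp (C : AddCat) (A B D : FObj C) (g : FHom B D) (f : FHom A B)
  : FHom A D := exist _ (comp (sval g) (sval f)) (fcomp_proof g f).

Lemma fid_proof (C : AddCat) (A : FObj C) :
  exists omega : Hom (fr A) (fr A), comp (idm (fo A)) (frho A) = comp (frho A) omega.
Proof. by exists (idm (fr A)); rewrite comp1m compm1. Qed.

Definition fid (C : AddCat) (A : FObj C) : FHom A A :=
  exist _ (idm (fo A)) (fid_proof A).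

Definition obj_in (C : AddCat) (x : C) : FObj C := FOb x zob 0.

Record BiFunctor (C : AddCat) := {
  Tob : C -> C -> FObj C;
  Tmor : forall a a' b b', Hom a a' -> Hom b b' -> FHom (Tob a b) (Tob a' b');
  Tmor_id : forall a b, fequiv (Tmor (idm a) (idm b)) (fid (Tob a b));
  Tmor_comp : forall a a' a'' b b' b''
      (al : Hom a a') (al' : Hom a' a'') (be : Hom b b') (be' : Hom b' b''),
      fequiv (Tmor (comp al' al) (comp be' be)) (fcomp (Tmor al' be') (Tmor al be));
  TmorDl : forall a a' b b' (al1 al2 : Hom a a') (be : Hom b b'),
      requiv (Tob a' b') (sval (Tmor (al1 + al2) be))
             (sval (Tmor al1 be) + sval (Tmor al2 be));
  TmorDr : forall a a' b b' (al : Hom a a') (be1 be2 : Hom b b'),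
      requiv (Tob a' b') (sval (Tmor al (be1 + be2)))
             (sval (Tmor al be1) + sval (Tmor al be2))
}.
Arguments Tob {C} T : rename.
Arguments Tmor {C} T {a a' b b'} : rename.

(* ---------- The extension hat T.
   hat T (A, B) = cok( T(a,r_b) (+) T(r_a,b) --(T(id,rho_b), T(rho_a,id))--> T(a,b) ),
   computed by the standard explicit cokernel in A(A): the cokernel of
   gamma : (u <- r_u) -> (z <- r_z) is (z <- r_z (+) u) with structure map [rho_z, gamma]. *)
Definition That (C : AddCat) (T : BiFunctor C) (A B : FObj C) : FObj C :=
  FOb (fo (Tob T (fo A) (fo B)))
      (bsum (fr (Tob T (fo A) (fo B)))
            (bsum (fo (Tob T (fo A) (fr B))) (fo (Tob T (fr A) (fo B)))))
      (bmap (frho (Tob T (fo A) (fo B)))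
            (bmap (sval (Tmor T (idm (fo A)) (frho B)))
                  (sval (Tmor T (frho A) (idm (fo B)))))).

Definition That_rep (C : AddCat) (T : BiFunctor C) (A A' B B' : FObj C)
  (f : FHom A A') (g : FHom B B') : Hom (fo (That T A B)) (fo (That T A' B')) :=
  sval (Tmor T (sval f) (sval g)).

Definition has_right_adjoint (C : AddCat) (F_ob : FObj C -> FObj C)
  (F_rep : forall X X' : FObj C, FHom X X' -> Hom (fo (F_ob X)) (fo (F_ob X'))) : Prop :=
  exists (G_ob : FObj C -> FObj C)
         (G_mor : forall Y Y' : FObj C, FHom Y Y' -> FHom (G_ob Y) (G_ob Y'))
         (psi : forall X Y : FObj C, FHom X (G_ob Y) -> FHom (F_ob X) Y),
    (forall Y Y' (k k' : FHom Y Y'), fequiv k k' -> fequiv (G_mor _ _ k) (G_mor _ _ k')) /\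
    (forall Y, fequiv (G_mor _ _ (fid Y)) (fid (G_ob Y))) /\
    (forall Y Y' Y'' (k : FHom Y Y') (k' : FHom Y' Y''),
        fequiv (G_mor _ _ (fcomp k' k)) (fcomp (G_mor _ _ k') (G_mor _ _ k))) /\
    (forall X Y (g g' : FHom X (G_ob Y)), fequiv g g' -> fequiv (psi _ _ g) (psi _ _ g')) /\
    (forall X Y (g g' : FHom X (G_ob Y)), fequiv (psi _ _ g) (psi _ _ g') -> fequiv g g') /\
    (forall X Y (f : FHom (F_ob X) Y), exists g : FHom X (G_ob Y), fequiv (psi _ _ g) f) /\
    (forall X X' Y (h : FHom X' X) (g : FHom X (G_ob Y)),
        requiv Y (sval (psi _ _ (fcomp g h))) (comp (sval (psi _ _ g)) (F_rep _ _ h))) /\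
    (forall X Y Y' (k : FHom Y Y') (g : FHom X (G_ob Y)),
        fequiv (psi _ _ (fcomp (G_mor _ _ k) g)) (fcomp k (psi _ _ g))).

Definition tens_ob (C : AddCat) (T : BiFunctor C) (B : FObj C) (X : FObj C) : FObj C :=
  That T X B.
Definition tens_rep (C : AddCat) (T : BiFunctor C) (B : FObj C) (X X' : FObj C)
  (h : FHom X X') : Hom (fo (tens_ob T B X)) (fo (tens_ob T B X')) :=
  That_rep T h (fid B).

Arguments has_right_adjoint {C} F_ob F_rep.
Arguments tens_ob {C} T B X.
Arguments tens_rep {C} T B X X' h.

(* Main.v *)
From Pilot Require Import Defs.
From mathcomp Require Import all_boot all_algebra.
From Stdlib Require Import ClassicalEpsilon.
Import Pilot.Defs.
Set Implicit Arguments. Unset Strict Implicit. Unset Printing Implicit Defensive.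
Import GRing.Theory.
Local Open Scope ring_scope.

Section Basics.
Variable C : AddCat.

Lemma comp0m (a b c : C) (f : Hom a b) : comp (0 : Hom b c) f = 0.
Proof. apply: (addrI (comp (0 : Hom b c) f)); by rewrite addr0 -compDl addr0. Qed.

Lemma compm0 (a b c : C) (g : Hom b c) : comp g (0 : Hom a b) = 0.
Proof. apply: (addrI (comp g (0 : Hom a b))); by rewrite addr0 -compDr addr0. Qed.

Lemma compNl (a b c : C) (g : Hom b c) (f : Hom a b) : comp (- g) f = - comp g f.
Proof. by apply/eqP; rewrite -subr_eq0 opprK -compDl addNr comp0m. Qed.

Lemma compNr (a b c : C) (g : Hom b c) (f : Hom a b) : comp g (- f) = - comp g f.
Proof. by apply/eqP; rewrite -subr_eq0 opprK -compDr addNr compm0. Qed.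

Lemma compBl (a b c : C) (g1 g2 : Hom b c) (f : Hom a b) :
  comp (g1 - g2) f = comp g1 f - comp g2 f.
Proof. by rewrite compDl compNl. Qed.

Lemma compBr (a b c : C) (g : Hom b c) (f1 f2 : Hom a b) :
  comp g (f1 - f2) = comp g f1 - comp g f2.
Proof. by rewrite compDr compNr. Qed.

Definition pairm (a b d : C) (x : Hom d a) (y : Hom d b) : Hom d (bsum a b) :=
  comp bin1 x + comp bin2 y.

Lemma bmap_comp (a b c d : C) (f : Hom a c) (g : Hom b c) (h : Hom d (bsum a b)) :
  comp (bmap f g) h = comp f (comp bpr1 h) + comp g (comp bpr2 h).
Proof. by rewrite /bmap compDl -!compA. Qed.

Lemma bpr1_pair (a b d : C) (x : Hom d a) (y : Hom d b) : comp bpr1 (pairm x y) = x.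
Proof. by rewrite /pairm compDr !compA bpr1in1 bpr1in2 comp1m comp0m addr0. Qed.

Lemma bpr2_pair (a b d : C) (x : Hom d a) (y : Hom d b) : comp bpr2 (pairm x y) = y.
Proof. by rewrite /pairm compDr !compA bpr2in1 bpr2in2 comp1m comp0m add0r. Qed.

Lemma bmap_pair (a b c d : C) (f : Hom a c) (g : Hom b c) (x : Hom d a) (y : Hom d b) :
  comp (bmap f g) (pairm x y) = comp f x + comp g y.
Proof. by rewrite bmap_comp bpr1_pair bpr2_pair. Qed.

Lemma bmap_in1 (a b c : C) (f : Hom a c) (g : Hom b c) : comp (bmap f g) bin1 = f.
Proof. by rewrite bmap_comp bpr1in1 bpr2in1 compm1 compm0 addr0. Qed.

Lemma bmap_in2 (a b c : C) (f : Hom a c) (g : Hom b c) : comp (bmap f g) bin2 = g.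
Proof. by rewrite bmap_comp bpr1in2 bpr2in2 compm1 compm0 add0r. Qed.

Lemma comp_bmap (a b c e : C) (k : Hom c e) (f : Hom a c) (g : Hom b c) :
  comp k (bmap f g) = bmap (comp k f) (comp k g).
Proof. by rewrite /bmap compDr !compA. Qed.

Definition fac (r y s : C) (rho : Hom r y) (m : Hom s y) := exists w : Hom s r, m = comp rho w.

Lemma fac0 (r y s : C) (rho : Hom r y) : fac rho (0 : Hom s y).
Proof. by exists 0; rewrite compm0. Qed.

Lemma facD (r y s : C) (rho : Hom r y) (m1 m2 : Hom s y) :
  fac rho m1 -> fac rho m2 -> fac rho (m1 + m2).
Proof. by move=> [w1 ->] [w2 ->]; exists (w1 + w2); rewrite compDr. Qed.

Lemma facN (r y s : C) (rho : Hom r y) (m : Hom s y) : fac rho m -> fac rho (- m).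
Proof. by move=> [w ->]; exists (- w); rewrite compNr. Qed.

Lemma fac_compr (r y s s' : C) (rho : Hom r y) (m : Hom s y) (h : Hom s' s) :
  fac rho m -> fac rho (comp m h).
Proof. by move=> [w ->]; exists (comp w h); rewrite compA. Qed.

Lemma fac_through (ry y z q s : C) (rY : Hom ry y) (f : Hom z y) (r : Hom q z) (m : Hom s z) :
  fac rY (comp f r) -> fac r m -> fac rY (comp f m).
Proof. by move=> [w1 e] [w ->]; rewrite compA e -compA; exists (comp w1 w). Qed.

Lemma fac_bmap1 (r y a b : C) (rho : Hom r y) (p : Hom a y) (q : Hom b y) :
  fac rho (bmap p q) -> fac rho p /\ fac rho q.
Proof.
move=> [w e]; split; [exists (comp w bin1) | exists (comp w bin2)].
  by rewrite compA -e bmap_in1.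
by rewrite compA -e bmap_in2.
Qed.

Lemma fac_bmap2 (r y a b : C) (rho : Hom r y) (p : Hom a y) (q : Hom b y) :
  fac rho p -> fac rho q -> fac rho (bmap p q).
Proof. by move=> [w1 ->] [w2 ->]; exists (bmap w1 w2); rewrite comp_bmap. Qed.

Lemma fac_equiv_through (ry y z q s : C) (rY : Hom ry y) (f : Hom z y) (r : Hom q z)
  (u v : Hom s z) :
  fac r (u - v) -> fac rY (comp f r) -> fac rY (comp f v) -> fac rY (comp f u).
Proof.
move=> h1 h2 h3; have -> : u = (u - v) + v by rewrite subrK.
by rewrite compDr; apply: facD => //; apply: fac_through h2 h1.
Qed.

Lemma req_fac (B : FObj C) (s : C) (u v : Hom s (fo B)) :
  requiv B u v <-> fac (frho B) (u - v).
Proof. by []. Qed.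

Lemma req0 (B : FObj C) (s : C) (u : Hom s (fo B)) :
  requiv B u 0 <-> fac (frho B) u.
Proof. by split; move=> [w e]; exists w; rewrite -e subr0. Qed.

Lemma req_refl (B : FObj C) (s : C) (u : Hom s (fo B)) : requiv B u u.
Proof. by exists 0; rewrite subrr compm0. Qed.

Lemma req_eq (B : FObj C) (s : C) (u v : Hom s (fo B)) : u = v -> requiv B u v.
Proof. by move->; apply: req_refl. Qed.

Lemma req_sym (B : FObj C) (s : C) (u v : Hom s (fo B)) : requiv B u v -> requiv B v u.
Proof. by move=> [w e]; exists (- w); rewrite compNr -e opprB. Qed.

Lemma req_trans (B : FObj C) (s : C) (u v w : Hom s (fo B)) :
  requiv B u v -> requiv B v w -> requiv B u w.
Proof.
move=> [w1 e1] [w2 e2]; exists (w1 + w2).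
by rewrite compDr -e1 -e2 addrA subrK.
Qed.

Lemma req_compr (B : FObj C) (s s' : C) (u v : Hom s (fo B)) (h : Hom s' s) :
  requiv B u v -> requiv B (comp u h) (comp v h).
Proof. by move=> [w e]; exists (comp w h); rewrite -compBl e compA. Qed.

Lemma req_post_gen (B Y : FObj C) (s : C) (u v : Hom s (fo B)) (f : Hom (fo B) (fo Y)) :
  requiv B u v -> fac (frho Y) (comp f (frho B)) -> requiv Y (comp f u) (comp f v).
Proof.
move=> h1 h2; apply/req_fac; rewrite -compBr.
by apply: fac_through h2 h1.
Qed.

Lemma req_post (B Y : FObj C) (s : C) (u v : Hom s (fo B)) (k : FHom B Y) :
  requiv B u v -> requiv Y (comp (sval k) u) (comp (sval k) v).
Proof. by move=> h; apply: req_post_gen h (proj2_sig k). Qed.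

Lemma fcomp1 (X Y : FObj C) (g : FHom X Y) : fequiv (fcomp (fid Y) g) g.
Proof. by apply: req_eq; rewrite /= comp1m. Qed.

End Basics.

Section Yoneda.
Variable C : AddCat.

Lemma adj_from_psi (F_ob : FObj C -> FObj C)
  (F_rep : forall X X' : FObj C, FHom X X' -> Hom (fo (F_ob X)) (fo (F_ob X')))
  (G_ob : FObj C -> FObj C)
  (psi : forall X Y, FHom X (G_ob Y) -> FHom (F_ob X) Y) :
  (forall X Y (g g' : FHom X (G_ob Y)), fequiv g g' -> fequiv (psi _ _ g) (psi _ _ g')) ->
  (forall X Y (g g' : FHom X (G_ob Y)), fequiv (psi _ _ g) (psi _ _ g') -> fequiv g g') ->
  (forall X Y (f : FHom (F_ob X) Y), exists g : FHom X (G_ob Y), fequiv (psi _ _ g) f) ->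
  (forall X X' Y (h : FHom X' X) (g : FHom X (G_ob Y)),
        requiv Y (sval (psi _ _ (fcomp g h))) (comp (sval (psi _ _ g)) (F_rep _ _ h))) ->
  has_right_adjoint F_ob F_rep.
Proof.
move=> wd inj surj nat.
pose Gm Y Y' (k : FHom Y Y') : FHom (G_ob Y) (G_ob Y') :=
  proj1_sig (constructive_indefinite_description _
     (surj (G_ob Y) Y' (fcomp k (psi _ _ (fid (G_ob Y)))))).
have GmP : forall Y Y' (k : FHom Y Y'),
    fequiv (psi _ _ (Gm Y Y' k)) (fcomp k (psi _ _ (fid _))).
  by move=> Y Y' k; rewrite /Gm; case: constructive_indefinite_description.
have natY : forall X Y Y' (k : FHom Y Y') (g : FHom X (G_ob Y)),
    fequiv (psi _ _ (fcomp (Gm _ _ k) g)) (fcomp k (psi _ _ g)).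
  move=> X Y Y' k g.
  apply: req_trans (nat _ _ _ g (Gm _ _ k)) _.
  apply: req_trans (req_compr _ (GmP _ _ k)) _ => /=.
  rewrite -compA; apply: req_post.
  apply: req_trans (req_sym (nat _ _ _ g (fid _))) _.
  exact: wd (fcomp1 g).
exists G_ob, Gm, psi; split; last split; last split; last split; last split;
  last split; last split.
all: try (first [exact wd | exact inj | exact surj | exact nat | exact natY]).
- move=> Y Y' k k' kk; apply: inj.
  apply: req_trans (GmP _ _ k) _; apply: req_sym; apply: req_trans (GmP _ _ k') _.
  by apply: req_compr; apply: req_sym.
- move=> Y; apply: inj; apply: req_trans (GmP _ _ _) _.
  by apply: req_eq; rewrite /= comp1m.
- move=> Y Y' Y'' k k'; apply: inj.
  apply: req_trans (GmP _ _ _) _; apply: req_sym.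
  apply: req_trans (natY _ _ _ _ _) _ => /=.
  apply: req_trans (req_post k' (GmP _ _ k)) _ => /=.
  by apply: req_eq; rewrite compA.
Qed.

End Yoneda.

Section TLemmas.
Variables (C : AddCat) (T : BiFunctor C).

Lemma LT0r (x x' b b' : C) (al : Hom x x') :
  requiv (Tob T x' b') (sval (Tmor T al (0 : Hom b b'))) 0.
Proof.
have := TmorDr T al (0 : Hom b b') 0; rewrite addr0 => -[w e].
by exists (- w); rewrite compNr -e subr0 opprB addrK.
Qed.

Lemma LT0l (x x' b b' : C) (be : Hom b b') :
  requiv (Tob T x' b') (sval (Tmor T (0 : Hom x x') be)) 0.
Proof.
have := TmorDl T (0 : Hom x x') 0 be; rewrite addr0 => -[w e].
by exists (- w); rewrite compNr -e subr0 opprB addrK.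
Qed.

Lemma LTcomm (x x' b b' : C) (h : Hom x x') (be : Hom b b') :
  requiv (Tob T x' b')
    (comp (sval (Tmor T (idm x') be)) (sval (Tmor T h (idm b))))
    (comp (sval (Tmor T h (idm b'))) (sval (Tmor T (idm x) be))).
Proof.
have e1 := Tmor_comp T h (idm x') (idm b) be.
have e2 := Tmor_comp T (idm x) h be (idm b').
rewrite comp1m compm1 in e1; rewrite compm1 comp1m in e2.
exact: req_trans (req_sym e1) e2.
Qed.

Lemma LTcompl (x b b' b'' : C) (be : Hom b' b'') :
  requiv (Tob T x b'')
    (comp (sval (Tmor T (idm x) be)) (sval (Tmor T (idm x) (0 : Hom b b')))) 0.
Proof.
have e := Tmor_comp T (idm x) (idm x) (0 : Hom b b') be.
rewrite comp1m compm0 in e.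
exact: req_trans (req_sym e) (LT0r _ _ _).
Qed.

Lemma That_fac1 (X B Y : FObj C) (f : Hom (fo (Tob T (fo X) (fo B))) (fo Y)) :
  fac (frho Y) (comp f (frho (That T X B))) ->
  [/\ fac (frho Y) (comp f (frho (Tob T (fo X) (fo B)))),
      fac (frho Y) (comp f (sval (Tmor T (idm (fo X)) (frho B)))) &
      fac (frho Y) (comp f (sval (Tmor T (frho X) (idm (fo B)))))].
Proof.
rewrite /= !comp_bmap => /fac_bmap1 [h1 /fac_bmap1 [h2 h3]]; by split.
Qed.

Lemma That_fac2 (X B Y : FObj C) (f : Hom (fo (Tob T (fo X) (fo B))) (fo Y)) :
  fac (frho Y) (comp f (frho (Tob T (fo X) (fo B)))) ->
  fac (frho Y) (comp f (sval (Tmor T (idm (fo X)) (frho B)))) ->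
  fac (frho Y) (comp f (sval (Tmor T (frho X) (idm (fo B))))) ->
  fac (frho Y) (comp f (frho (That T X B))).
Proof.
move=> h1 h2 h3; rewrite /= !comp_bmap; apply: fac_bmap2 => //; exact: fac_bmap2.
Qed.

Lemma f_rT (X B Y : FObj C) (f : FHom (That T X B) Y) :
  fac (frho Y) (comp (sval f) (frho (Tob T (fo X) (fo B)))).
Proof. by case: (That_fac1 (proj2_sig f)). Qed.

Lemma f_Tr (X B Y : FObj C) (f : FHom (That T X B) Y) :
  fac (frho Y) (comp (sval f) (sval (Tmor T (idm (fo X)) (frho B)))).
Proof. by case: (That_fac1 (proj2_sig f)). Qed.

Lemma f_Tl (X B Y : FObj C) (f : FHom (That T X B) Y) :
  fac (frho Y) (comp (sval f) (sval (Tmor T (frho X) (idm (fo B))))).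
Proof. by case: (That_fac1 (proj2_sig f)). Qed.

Lemma ofA_proof (X B Y : FObj C) (f : FHom (That T X B) Y) :
  exists om, comp (sval f) (frho (That T X (obj_in (fo B)))) = comp (frho Y) om.
Proof.
apply: (That_fac2 (B := obj_in (fo B))).
- exact: f_rT f.
- apply: (fac_equiv_through (v := 0)).
  + rewrite subr0; apply/req0; exact: LT0r.
  + exact: f_rT f.
  + by rewrite compm0; apply: fac0.
- exact: f_Tl f.
Qed.

Definition ofA (X B Y : FObj C) (f : FHom (That T X B) Y) :
  FHom (That T X (obj_in (fo B))) Y := exist _ (sval f) (ofA_proof f).

Lemma toA_proof (X B Y : FObj C) (f : FHom (That T X (obj_in (fo B))) Y)
  (H : fac (frho Y) (comp (sval f) (sval (Tmor T (idm (fo X)) (frho B))))) :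
  exists om, comp (sval f) (frho (That T X B)) = comp (frho Y) om.
Proof.
apply: That_fac2 => //.
- exact: f_rT f.
- exact: f_Tl f.
Qed.

Definition toA (X B Y : FObj C) (f : FHom (That T X (obj_in (fo B))) Y)
  (H : fac (frho Y) (comp (sval f) (sval (Tmor T (idm (fo X)) (frho B))))) :
  FHom (That T X B) Y := exist _ (sval f) (toA_proof H).

Lemma restr_proof (X B Y : FObj C) (f : FHom (That T X (obj_in (fo B))) Y) :
  exists om, comp (comp (sval f) (sval (Tmor T (idm (fo X)) (frho B))))
                  (frho (That T X (obj_in (fr B)))) = comp (frho Y) om.
Proof.
apply: (That_fac2 (B := obj_in (fr B))).
- rewrite -compA; apply: fac_through (f_rT f) _.
  exact: (proj2_sig (Tmor T (idm (fo X)) (frho B))).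
- rewrite -compA; apply: (fac_equiv_through (r := frho (Tob T (fo X) (fo B))) (v := 0)).
  + rewrite subr0; apply/req0; exact: LTcompl.
  + exact: f_rT f.
  + by rewrite compm0; apply: fac0.
- rewrite -compA; apply: (fac_equiv_through (r := frho (Tob T (fo X) (fo B)))) (LTcomm _ _) _ _.
  + exact: f_rT f.
  + rewrite compA; apply: fac_compr; exact: f_Tl f.
Qed.

Definition restr (X B Y : FObj C) (f : FHom (That T X (obj_in (fo B))) Y) :
  FHom (That T X (obj_in (fr B))) Y := exist _ _ (restr_proof f).

End TLemmas.

Section Kernel.
Variables (C : AddCat) (wk : has_weak_kernels C).

Lemma wk_sig (x y : C) (al : Hom x y) :
  {k : C & {iota : Hom k x | comp al iota = 0 /\
     forall (t : C) (tau : Hom t x), comp al tau = 0 ->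
        exists sigma : Hom t k, tau = comp iota sigma}}.
Proof.
have [k Hk] := constructive_indefinite_description _ (wk al).
have [i Hi] := constructive_indefinite_description _ Hk.
by exists k; exists i.
Qed.

Variables (U V : FObj C) (t : Hom (fo U) (fo V)).

Definition km := bmap t (frho V).
Definition kk : C := projT1 (wk_sig km).
Definition kappa : Hom kk (bsum (fo U) (fr V)) := sval (projT2 (wk_sig km)).
Lemma kappaP : comp km kappa = 0 /\
     forall (s : C) (tau : Hom s _), comp km tau = 0 ->
        exists sigma : Hom s kk, tau = comp kappa sigma.
Proof. exact: (proj2_sig (projT2 (wk_sig km))). Qed.
Definition ki : Hom kk (fo U) := comp bpr1 kappa.
Definition kn := bmap ki (frho U).
Definition krk : C := projT1 (wk_sig kn).
Definition kmu : Hom krk (bsum kk (fr U)) := sval (projT2 (wk_sig kn)).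
Lemma kmuP : comp kn kmu = 0 /\
     forall (s : C) (tau : Hom s _), comp kn tau = 0 ->
        exists sigma : Hom s krk, tau = comp kmu sigma.
Proof. exact: (proj2_sig (projT2 (wk_sig kn))). Qed.

Definition KO : FObj C := FOb kk krk (comp bpr1 kmu).

Lemma iota_proof : exists om : Hom (fr KO) (fr U),
  comp ki (frho KO) = comp (frho U) om.
Proof.
exists (- comp bpr2 kmu); rewrite compNr /=.
apply/eqP; rewrite -subr_eq0 opprK.
by have [e _] := kmuP; rewrite /kn bmap_comp in e; rewrite e.
Qed.

Definition kiota : FHom KO U := exist _ ki iota_proof.

Lemma K1 : requiv V (comp t ki) 0.
Proof.
apply/req0; exists (- comp bpr2 kappa); rewrite compNr.
apply/eqP; rewrite -subr_eq0 opprK.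
by have [e _] := kappaP; rewrite /km bmap_comp in e; rewrite /ki e.
Qed.

Lemma K2 (X : FObj C) (g : FHom X U) : requiv V (comp t (sval g)) 0 ->
  exists g' : FHom X KO, comp ki (sval g') = sval g.
Proof.
move=> /req0 [lam e].
have [_ H] := kappaP.
have e1 : comp km (pairm (sval g) (- lam)) = 0.
  by rewrite /km bmap_pair e compNr subrr.
have [sig esig] := H _ _ e1.
have [om eom] := proj2_sig g.
have [_ H2] := kmuP.
have e2 : comp kn (pairm (comp sig (frho X)) (- om)) = 0.
  by rewrite /kn bmap_pair /ki !compA -(compA bpr1) -esig bpr1_pair eom compNr subrr.
have [nu enu] := H2 _ _ e2.
have sP : exists om' : Hom (fr X) (fr KO), comp sig (frho X) = comp (frho KO) om'.
  by exists nu; rewrite /= -compA -enu bpr1_pair.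
exists (exist _ sig sP) => /=.
by rewrite /ki -compA -esig bpr1_pair.
Qed.

Lemma K3 (X : FObj C) (g1 g2 : FHom X KO) :
  requiv U (comp ki (sval g1)) (comp ki (sval g2)) -> fequiv g1 g2.
Proof.
move=> [lam e].
have [_ H2] := kmuP.
have e2 : comp kn (pairm (sval g1 - sval g2) (- lam)) = 0.
  by rewrite /kn bmap_pair compBr e compNr subrr.
have [nu enu] := H2 _ _ e2.
by exists nu; rewrite /= -compA -enu bpr1_pair.
Qed.

End Kernel.

Section Main.
Variables (C : AddCat) (T : BiFunctor C) (A : FObj C).
Hypothesis wk : has_weak_kernels C.
Variables (Ga : FObj C -> FObj C)
  (psia : forall X Y, FHom X (Ga Y) -> FHom (tens_ob T (obj_in (fo A)) X) Y).
Hypothesis wda : forall X Y (g g' : FHom X (Ga Y)), fequiv g g' -> fequiv (psia g) (psia g').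
Hypothesis inja : forall X Y (g g' : FHom X (Ga Y)), fequiv (psia g) (psia g') -> fequiv g g'.
Hypothesis surja : forall X Y (f : FHom (tens_ob T (obj_in (fo A)) X) Y), exists g : FHom X (Ga Y), fequiv (psia g) f.
Hypothesis nata : forall X X' Y (h : FHom X' X) (g : FHom X (Ga Y)),
  requiv Y (sval (psia (fcomp g h))) (comp (sval (psia g)) (tens_rep T (obj_in (fo A)) _ _ h)).
Variables (Gr : FObj C -> FObj C)
  (psir : forall X Y, FHom X (Gr Y) -> FHom (tens_ob T (obj_in (fr A)) X) Y).
Hypothesis wdr : forall X Y (g g' : FHom X (Gr Y)), fequiv g g' -> fequiv (psir g) (psir g').
Hypothesis injr : forall X Y (g g' : FHom X (Gr Y)), fequiv (psir g) (psir g') -> fequiv g g'.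
Hypothesis surjr : forall X Y (f : FHom (tens_ob T (obj_in (fr A)) X) Y), exists g : FHom X (Gr Y), fequiv (psir g) f.
Hypothesis natr : forall X X' Y (h : FHom X' X) (g : FHom X (Gr Y)),
  requiv Y (sval (psir (fcomp g h))) (comp (sval (psir g)) (tens_rep T (obj_in (fr A)) _ _ h)).

Definition Pa Y : FHom (That T (Ga Y) (obj_in (fo A))) Y := psia (fid (Ga Y)).

Definition theta_sig Y := constructive_indefinite_description _ (surjr (restr (Pa Y))).
Definition theta Y : FHom (Ga Y) (Gr Y) := proj1_sig (theta_sig Y).
Lemma thetaP Y : fequiv (psir (theta Y)) (restr (Pa Y)).
Proof. exact: (proj2_sig (theta_sig Y)). Qed.

Lemma Ktheta X Y (g : FHom X (Ga Y)) :
  requiv Y (sval (psir (fcomp (theta Y) g)))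
    (comp (sval (psia g)) (sval (Tmor T (idm (fo X)) (frho A)))).
Proof.
apply: req_trans (natr g (theta Y)) _.
apply: req_trans (req_compr _ (thetaP Y)) _ => /=.
rewrite -compA.
apply: req_trans (req_post_gen (LTcomm T _ _) (f_rT (Pa Y))) _.
rewrite compA; apply: req_compr.
apply: req_trans (req_sym (nata g (fid (Ga Y)))) _.
exact: wda (fcomp1 g).
Qed.

Lemma fzero_proof (X Z : FObj C) : exists om : Hom (fr X) (fr Z),
  comp (0 : Hom (fo X) (fo Z)) (frho X) = comp (frho Z) om.
Proof. by exists 0; rewrite comp0m compm0. Qed.

Definition fzero (X Z : FObj C) : FHom X Z := exist _ 0 (fzero_proof X Z).

Lemma psir_zero X Y : requiv Y (sval (psir (fzero X (Gr Y)))) 0.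
Proof.
have e2 : fequiv (fcomp (fzero X (Gr Y)) (fzero X X)) (fzero X (Gr Y)).
  by apply: req_eq; rewrite /= comp0m.
apply: req_trans (req_sym (wdr e2)) _.
apply: req_trans (natr (fzero X X) (fzero X (Gr Y))) _.
rewrite /tens_rep /That_rep /=. apply: req_trans (req_post_gen (LT0l T (fo X) (fo X) (idm (fr A))) (f_rT (B := obj_in (fr A)) (psir (fzero X (Gr Y))))) _.
by apply: req_eq; rewrite compm0.
Qed.

Lemma condK1 X Y (g : FHom X (Ga Y)) :
  requiv (Gr Y) (sval (fcomp (theta Y) g)) 0 ->
  fac (frho Y) (comp (sval (psia g)) (sval (Tmor T (idm (fo X)) (frho A)))).
Proof.
move=> H.
have H' : fequiv (fcomp (theta Y) g) (fzero X (Gr Y)) by [].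
apply/req0.
apply: req_trans (req_sym (Ktheta g)) _.
apply: req_trans (wdr H') _.
exact: psir_zero.
Qed.

Lemma condK2 X Y (g : FHom X (Ga Y)) :
  fac (frho Y) (comp (sval (psia g)) (sval (Tmor T (idm (fo X)) (frho A)))) ->
  requiv (Gr Y) (sval (fcomp (theta Y) g)) 0.
Proof.
move=> /req0 H.
have : fequiv (fcomp (theta Y) g) (fzero X (Gr Y)).
  apply: injr.
  apply: req_trans (Ktheta g) _.
  apply: req_trans H _.
  exact: req_sym (psir_zero X Y).
by [].
Qed.

Definition GA Y : FObj C := KO wk (sval (theta Y)).
Definition iotaY Y : FHom (GA Y) (Ga Y) := kiota wk (sval (theta Y)).

Lemma psiA_fac X Y (g : FHom X (GA Y)) :
  fac (frho Y) (comp (sval (psia (fcomp (iotaY Y) g)))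
                     (sval (Tmor T (idm (fo X)) (frho A)))).
Proof.
apply: condK1 => /=.
rewrite compA.
apply: req_trans (req_compr (sval g) (K1 wk (sval (theta Y)))) _.
by apply: req_eq; rewrite comp0m.
Qed.

Definition psiA X Y (g : FHom X (GA Y)) : FHom (tens_ob T A X) Y :=
  toA (psiA_fac g).

Lemma main_adj : has_right_adjoint (tens_ob T A) (tens_rep T A).
Proof.
apply: (@adj_from_psi _ _ _ GA psiA).
- move=> X Y g g' H.
  apply: wda; exact: req_post (iotaY Y) H.
- move=> X Y g g' H.
  apply: K3; apply: (inja (g := fcomp (iotaY Y) g) (g' := fcomp (iotaY Y) g')); exact: H.
- move=> X Y f.
  have [g Hg] := surja (ofA f).
  have Hf := f_Tr f.
  have Hc : fac (frho Y) (comp (sval (psia g)) (sval (Tmor T (idm (fo X)) (frho A)))).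
    have -> : comp (sval (psia g)) (sval (Tmor T (idm (fo X)) (frho A))) =
      comp (sval (psia g) - sval f) (sval (Tmor T (idm (fo X)) (frho A))) +
      comp (sval f) (sval (Tmor T (idm (fo X)) (frho A))) by rewrite compBl subrK.
    apply: facD Hf; exact: fac_compr Hg.
  have [g' eg'] := K2 wk (condK2 Hc).
  exists g'.
  apply: req_trans _ Hg.
  apply: wda; apply: req_eq; exact: eg'.
- move=> X X' Y h g.
  apply: req_trans _ (nata h (fcomp (iotaY Y) g)).
  apply: wda; apply: req_eq => /=; exact: compA.
Qed.

End Main.

Theorem theorem3p21 (C : AddCat) (T : BiFunctor C) (A : FObj C) :
  has_weak_kernels C ->
  has_right_adjoint (tens_ob T (obj_in (fo A))) (tens_rep T (obj_in (fo A))) ->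
  has_right_adjoint (tens_ob T (obj_in (fr A))) (tens_rep T (obj_in (fr A))) ->
  has_right_adjoint (tens_ob T A) (tens_rep T A).
Proof.
move=> wk [Ga [Gma [psia [_ [_ [_ [wda [inja [surja [nata _]]]]]]]]]]
  [Gr [Gmr [psir [_ [_ [_ [wdr [injr [surjr [natr _]]]]]]]]]].
exact: (@main_adj C T A wk Ga psia wda inja surja nata Gr psir wdr injr surjr natr).
Qed.
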